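(* Let $n\ge4$ and let $A$ be an $n\times n$ completely positive matrix whose graph is the $n$-cycle $1-2-\cdots-n-1$, and suppose $A=BB^T$ where $B$ is the $n\times n$ matrix whose $i$-th column, for $1\le i\le n-1$, has entry $s_i$ in row $i$, entry $t_i$ in row $i+1$ and zeros elsewhere, and whose $n$-th column has entry $t_n$ in row $1$, entry $s_n$ in row $n$ and zeros elsewhere, with all $s_i,t_i>0$. Then $A=BB^T$ is the unique CP factorization of $A$ if and only if $\prod_{i=1}^n s_i=\prod_{i=1}^n t_i$.
   Context: A symmetric $n\times n$ matrix $A$ is completely positive if $A=BB^T$ for some entrywise nonnegative $n\times k$ matrix $B$; such an equality is a CP factorization of $A$. Only CP factorizations in which the columns of $B$ are pairwise linearly independent are considered, and two CP factorizations $A=BB^T=CC^T$ are considered equal if $C=BP$ for a permutation matrix $P$. The graph of a symmetric $n\times n$ matrix $A$ has vertex set $\{1,\dots,n\}$, with $\{i,j\}$ ($i\ne j$) an edge iff $a_{ij}\ne 0$. *)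

(* Defs.v *)
From HB Require Import structures.
From mathcomp Require Import all_boot all_order all_algebra.
From mathcomp Require Import reals.
Set Implicit Arguments. Unset Strict Implicit. Unset Printing Implicit Defensive.
Import Order.TTheory GRing.Theory Num.Theory.
Local Open Scope ring_scope.

Definition nonneg_mx (R : realType) (m k : nat) (C : 'M[R]_(m, k)) : Prop :=
  forall i j, 0 <= C i j.

Definition pairwise_indep_cols (R : realType) (m k : nat) (C : 'M[R]_(m, k)) : Prop :=
  forall j1 j2 : 'I_k, j1 != j2 ->
    forall a b : R, a *: col j1 C + b *: col j2 C = 0 -> a = 0 /\ b = 0.

Definition completely_positive (R : realType) (n : nat) (A : 'M[R]_n) : Prop :=
  exists (k : nat) (C : 'M[R]_(n, k)), nonneg_mx C /\ A = C *m C^T.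

(* A = C C^T is a CP factorization (in the restricted sense of the paper:
   columns pairwise linearly independent) *)
Definition cp_factorization (R : realType) (n k : nat) (A : 'M[R]_n)
    (C : 'M[R]_(n, k)) : Prop :=
  [/\ nonneg_mx C, pairwise_indep_cols C & A = C *m C^T].

Definition same_up_to_col_perm (R : realType) (n k l : nat)
    (B : 'M[R]_(n, k)) (C : 'M[R]_(n, l)) : Prop :=
  exists f : 'I_l -> 'I_k, bijective f /\ forall i j, C i j = B i (f j).

Definition unique_cp_factorization (R : realType) (n k : nat) (A : 'M[R]_n)
    (B : 'M[R]_(n, k)) : Prop :=
  cp_factorization A B /\
  forall (l : nat) (C : 'M[R]_(n, l)), cp_factorization A C -> same_up_to_col_perm B C.

Definition graph_is_cycle (R : realType) (n : nat) (A : 'M[R]_n) : Prop :=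
  forall i j : 'I_n, i != j ->
    (A i j != 0 <-> (val j == (val i).+1 %% n)%N \/ (val i == (val j).+1 %% n)%N).

(* the n x n matrix B whose column j (0-based) has s_j in row j and t_j in
   row j+1 (mod n); for the last column this is t_n in row 1 and s_n in row n *)
Definition cycle_B (R : realType) (n : nat) (s t : 'I_n -> R) : 'M[R]_n :=
  \matrix_(i < n, j < n)
    (if i == j then s j else if (val i == (val j).+1 %% n)%N then t j else 0).

(* Main.v *)
Require Import Defs.
From HB Require Import structures.
From mathcomp Require Import all_boot all_order all_algebra.
From mathcomp Require Import reals.
From mathcomp Require Import ring lra zify.
Import Order.TTheory GRing.Theory Num.Theory.
Local Open Scope ring_scope.
Set Implicit Arguments. Unset Strict Implicit.

Section Cyc.
Variable n : nat.

Lemma nx_lt (i : 'I_n) : ((if i.+1 == n then 0 else i.+1) < n)%N.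
Proof. case: ifP => /eqP; have := ltn_ord i; lia. Qed.
Lemma pv_lt (i : 'I_n) : ((if val i == 0 then n.-1 else i.-1) < n)%N.
Proof. case: ifP => /eqP; have := ltn_ord i; lia. Qed.
Definition nx (i : 'I_n) : 'I_n := Ordinal (nx_lt i).
Definition pv (i : 'I_n) : 'I_n := Ordinal (pv_lt i).

Ltac ordl := rewrite /=; repeat (case: ifP => /eqP); lia.

Lemma nxK : cancel nx pv.
Proof. move=> i; apply: val_inj; have := ltn_ord i; ordl. Qed.
Lemma pvK : cancel pv nx.
Proof. move=> i; apply: val_inj; have := ltn_ord i; ordl. Qed.
Lemma nx_inj : injective nx. Proof. exact: can_inj nxK. Qed.
Lemma nx_mod (i : 'I_n) : nat_of_ord (nx i) = (i.+1 %% n)%N.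
Proof.
have := ltn_ord i; rewrite /=; case: ifP => /eqP h hi.
  by rewrite h modnn.
by rewrite modn_small //; lia.
Qed.

Lemma adjE (i j : 'I_n) : (val j == (val i).+1 %% n)%N = (j == nx i).
Proof. by rewrite -nx_mod. Qed.

Lemma cyc_ind (P : 'I_n -> Prop) : (forall i, P i -> P (nx i)) ->
  forall i0, P i0 -> forall j, P j.
Proof.
move=> hP i0 h0 j.
have hk : forall k, P (iter k nx i0) /\ nat_of_ord (iter k nx i0) = ((i0 + k) %% n)%N.
  elim=> [|k [IH1 IH2]].
    by rewrite /= addn0 modn_small.
  rewrite iterS; split; first exact: hP.
  by rewrite nx_mod IH2 -addn1 modnDml addn1 addnS.
have [h1 h2] := hk (j + (n - i0))%N.
have -> : j = iter (j + (n - i0))%N nx i0 => //.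
apply: val_inj; rewrite /= h2.
have := ltn_ord i0; move=> hi.
have -> : (i0 + (j + (n - i0)) = j + n)%N by lia.
by rewrite modnDr modn_small.
Qed.

Hypothesis hn : (4 <= n)%N.
Lemma nx_neq i : (nx i == i) = false.
Proof. apply/eqP => /(congr1 val); have := ltn_ord i; ordl. Qed.
Lemma pv_neq i : (pv i == i) = false.
Proof. apply/eqP => /(congr1 val); have := ltn_ord i; ordl. Qed.
Lemma nx2_neq i : (nx (nx i) == i) = false.
Proof. apply/eqP => /(congr1 val); have := ltn_ord i; ordl. Qed.
Lemma pv_nx_neq i : (pv i == nx i) = false.
Proof. apply/eqP => /(congr1 val); have := ltn_ord i; ordl. Qed.
Lemma pv_nx2_neq i : (pv i == nx (nx i)) = false.
Proof. apply/eqP => /(congr1 val); have := ltn_ord i; ordl. Qed.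

Variable R : realType.

Lemma Bentry (s t : 'I_n -> R) r j :
  cycle_B s t r j = (r == j)%:R * s j + (r == nx j)%:R * t j.
Proof.
rewrite /cycle_B mxE adjE.
case: eqP => [->|_]; first by rewrite (eq_sym j) nx_neq mul1r mul0r addr0.
by case: eqP => _; rewrite ?mul0r ?mul1r ?add0r.
Qed.

Lemma sum_delta (F : 'I_n -> R) i : \sum_j (j == i)%:R * F j = F i.
Proof.
rewrite (bigD1 i) //= eqxx mul1r big1 ?addr0 // => j /negPf ->; by rewrite mul0r.
Qed.

Lemma BBt (s t : 'I_n -> R) i k :
  (cycle_B s t *m (cycle_B s t)^T) i k =
  (k == i)%:R * (s i ^+ 2 + t (pv i) ^+ 2) + (k == nx i)%:R * (s i * t i)
  + (k == pv i)%:R * (s (pv i) * t (pv i)).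
Proof.
rewrite mxE.
have e : forall j, cycle_B s t i j = (j == i)%:R * s j + (j == pv i)%:R * t j.
  move=> j; rewrite Bentry (eq_sym i j).
  have -> : (i == nx j) = (j == pv i) by apply/eqP/eqP => [->|->]; rewrite ?nxK ?pvK.
  by [].
under eq_bigr => j _ do rewrite e [X in _ * X]mxE mulrDl -!mulrA.
rewrite big_split /= !sum_delta !Bentry pvK.
ring.
Qed.
End Cyc.

Section Ineq.
Variables (n : nat) (R : realType).
Hypothesis n0 : (0 < n)%N.

Lemma prod_nx (F : 'I_n -> R) : \prod_i F (nx i) = \prod_i F i.
Proof.
by rewrite [RHS](reindex_inj (@nx_inj n)).
Qed.

Lemma prod_contra (p q : 'I_n -> R) : (forall i, 0 <= p i < q i) ->
  \prod_i p i = \prod_i q i -> False.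
Proof.
move=> h e.
have : \prod_i p i < \prod_i q i.
  apply: ltr_prod => //.
  by apply/hasP; exists (Ordinal n0); rewrite ?mem_index_enum.
by rewrite e ltxx.
Qed.

Lemma cyc_ineq (a b s t : 'I_n -> R) :
  (forall i, 0 < s i) -> (forall i, 0 < t i) ->
  (forall i, 0 <= a i) -> (forall i, 0 <= b i) ->
  (forall i, s i ^+ 2 * t i ^+ 2 <= a i * b i) ->
  (forall i, a (nx i) + b i <= s (nx i) ^+ 2 + t i ^+ 2) ->
  \prod_i s i = \prod_i t i ->
  forall i, a i = s i ^+ 2 /\ b i = t i ^+ 2.
Proof.
move=> hs ht ha hb h1 h2 hst.
have hst2 : \prod_i s i ^+ 2 = \prod_i t i ^+ 2 by rewrite !prodrXl hst.
have case1 : forall i, s i ^+ 2 < a i -> False.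
  move=> i0 hi0.
  have all1 : forall j, s j ^+ 2 < a j.
    move=> j; rewrite ltNge; apply/negP => hj.
    suff : a i0 <= s i0 ^+ 2 by rewrite leNgt hi0.
    apply: (@cyc_ind n (fun i => a i <= s i ^+ 2) _ j hj) => {hi0} i hi.
    rewrite leNgt; apply/negP => hn.
    have := h1 i; have := h2 i; have := hb i; have := hs i; have := ht i.
    move=> hT hS hB H2 H1.
    have hS2 : 0 < (s i) ^+ 2 by rewrite exprn_gt0.
    have hbT : (b i) < (t i) ^+ 2 by lra.
    have p1 : 0 <= ((s i) ^+ 2 - (a i)) * (b i) by apply: mulr_ge0; lra.
    have p2 : 0 < (s i) ^+ 2 * ((t i) ^+ 2 - (b i)) by apply: mulr_gt0; lra.
    lra.
  apply: (@prod_contra (fun i => (a (nx i) - s (nx i) ^+ 2) * s i ^+ 2)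
      (fun i => t i ^+ 2 * (a i - s i ^+ 2))).
    move=> i; apply/andP; split.
      by apply: mulr_ge0; [have := all1 (nx i); lra| apply: sqr_ge0].
    have := h1 i; have := h2 i; have := hb i; have := hs i; have := ht i; have := all1 i.
    set E := a (nx i) - _.
    move=> hA hT hS hB H2 H1.
    have hS2 : 0 < (s i) ^+ 2 by rewrite exprn_gt0.
    have hT2 : 0 < (t i) ^+ 2 by rewrite exprn_gt0.
    have hE : E <= (t i) ^+ 2 - (b i) by rewrite /E; lra.
    have hA0 : 0 < (a i) by lra.
    suff : ((t i) ^+ 2 - (b i)) * (s i) ^+ 2 * (a i) < (t i) ^+ 2 * ((a i) - (s i) ^+ 2) * (a i).
      move=> hh; have hh' : ((t i) ^+ 2 - (b i)) * (s i) ^+ 2 < (t i) ^+ 2 * ((a i) - (s i) ^+ 2).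
        by rewrite -(ltr_pM2r hA0).
      nra.
    have q1 : 0 <= (s i) ^+ 2 * ((a i) * (b i) - (s i) ^+ 2 * (t i) ^+ 2) by apply: mulr_ge0; lra.
    have q2 : 0 < (t i) ^+ 2 * ((a i) - (s i) ^+ 2) ^+ 2 by apply: mulr_gt0 => //; apply: exprn_gt0; lra.
    nra.
  by rewrite big_split (prod_nx (fun i => a i - s i ^+ 2)) [RHS]big_split hst2 /= mulrC.
have all2 : forall i, a i <= s i ^+ 2.
  by move=> i; rewrite leNgt; apply/negP => /case1.
have case2 : forall i, a i < s i ^+ 2 -> False.
  move=> i0 hi0.
  have all1 : forall j, a j < s j ^+ 2.
    apply: (@cyc_ind n (fun i => a i < s i ^+ 2) _ i0 hi0) => i hi.
    have := h1 i; have := h2 i; have := ha i; have := hs i; have := ht i.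
    move=> hT hS hA H2 H1.
    have hT2 : 0 < (t i) ^+ 2 by rewrite exprn_gt0.
    suff : (t i) ^+ 2 < (b i) by lra.
    rewrite ltNge; apply/negP => hB.
    nra.
  apply: (@prod_contra (fun i => t i ^+ 2 * (s i ^+ 2 - a i))
      (fun i => s i ^+ 2 * (s (nx i) ^+ 2 - a (nx i)))).
    move=> i; apply/andP; split.
      by apply: mulr_ge0; [apply: sqr_ge0| have := all1 i; lra].
    have := h1 i; have := h2 i; have := ha i; have := hs i; have := ht i; have := all1 i.
    set E := _ - a (nx i).
    move=> hA hT hS hA0 H2 H1.
    have hS2 : 0 < (s i) ^+ 2 by rewrite exprn_gt0.
    have hT2 : 0 < (t i) ^+ 2 by rewrite exprn_gt0.
    have hE : (b i) - (t i) ^+ 2 <= E by rewrite /E; lra.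
    have hB : (t i) ^+ 2 < (b i) by nra.
    have hB0 : 0 < (b i) by lra.
    suff : (t i) ^+ 2 * ((s i) ^+ 2 - (a i)) * (b i) < (s i) ^+ 2 * ((b i) - (t i) ^+ 2) * (b i).
      move=> hh; have hh' : (t i) ^+ 2 * ((s i) ^+ 2 - (a i)) < (s i) ^+ 2 * ((b i) - (t i) ^+ 2).
        by rewrite -(ltr_pM2r hB0).
      nra.
    have q1 : 0 <= (t i) ^+ 2 * ((a i) * (b i) - (s i) ^+ 2 * (t i) ^+ 2) by apply: mulr_ge0; lra.
    have q2 : 0 < (s i) ^+ 2 * ((b i) - (t i) ^+ 2) ^+ 2 by apply: mulr_gt0 => //; apply: exprn_gt0; lra.
    nra.
  by rewrite big_split [RHS]big_split (prod_nx (fun i => s i ^+ 2 - a i)) hst2.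
have ea : forall i, a i = s i ^+ 2.
  move=> i; apply/eqP; rewrite eq_le all2 /= leNgt; apply/negP => /case2 //.
move=> i; split => //.
have := h1 i; have := h2 i; rewrite !ea.
have hS2 : 0 < s i ^+ 2 by rewrite exprn_gt0.
move=> H2 H1; apply/eqP; rewrite eq_le; apply/andP; split; first lra.
by rewrite -(ler_pM2l hS2).
Qed.
End Ineq.

Section Gen.
Variable R : realType.

Lemma indep_of m k (C : 'M[R]_(m, k)) j1 j2 :
  (exists r, C r j1 != 0 /\ C r j2 = 0) -> (exists r, C r j2 != 0) ->
  forall a b : R, a *: col j1 C + b *: col j2 C = 0 -> a = 0 /\ b = 0.
Proof.
move=> [r [h1 h2]] [r' h3] a b e.
have er : forall r, a * C r j1 + b * C r j2 = 0.
  move=> q; have := congr1 (fun M : 'M_(m,1) => M q 0) e.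
  by rewrite !mxE.
have ha : a = 0.
  by have := er r; rewrite h2 mulr0 addr0 => /eqP; rewrite mulf_eq0 (negPf h1) orbF => /eqP.
split=> //; have := er r'; rewrite ha mul0r add0r => /eqP.
by rewrite mulf_eq0 (negPf h3) orbF => /eqP.
Qed.

Lemma sum_prod (I : finType) (f g : I -> R) :
  (\sum_j f j) * (\sum_k g k) = \sum_j \sum_k f j * g k.
Proof. rewrite mulr_suml; apply: eq_bigr => j _; by rewrite mulr_sumr. Qed.

Lemma lagr_id (I : finType) (u v : I -> R) :
  \sum_j \sum_k (u j * v k - u k * v j) ^+ 2 =
  2 * ((\sum_j u j ^+ 2) * (\sum_j v j ^+ 2) - (\sum_j u j * v j) ^+ 2).
Proof.
rewrite expr2 !sum_prod.
have -> : (\sum_j \sum_k (u j * v k - u k * v j) ^+ 2) =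
  \sum_j \sum_k (u j ^+ 2 * v k ^+ 2) + \sum_j \sum_k (u k ^+ 2 * v j ^+ 2)
  - 2 * \sum_j \sum_k (u j * v j * (u k * v k)).
  transitivity (\sum_j \sum_k (u j ^+ 2 * v k ^+ 2 + u k ^+ 2 * v j ^+ 2
      - 2 * (u j * v j * (u k * v k)))).
    by apply: eq_bigr => j _; apply: eq_bigr => k _; ring.
  rewrite mulr_sumr -big_split -sumrB; apply: eq_bigr => j _.
  by rewrite mulr_sumr -big_split -sumrB.
rewrite [X in _ + X - _]exchange_big /=.
ring.
Qed.
End Gen.

Section Uniq.
Variables (n l : nat) (R : realType).
Hypothesis hn : (4 <= n)%N.
Variables (s t : 'I_n -> R) (C : 'M[R]_(n, l)).
Hypotheses (hs : forall i, 0 < s i) (ht : forall i, 0 < t i).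
Hypothesis hC0 : nonneg_mx C.
Hypothesis hCi : pairwise_indep_cols C.
Hypothesis hA : C *m C^T = cycle_B s t *m (cycle_B s t)^T.
Hypothesis hst : \prod_i s i = \prod_i t i.

Let M := cycle_B s t *m (cycle_B s t)^T.

Lemma ME i k : M i k = \sum_j C i j * C k j.
Proof. by rewrite /M -hA mxE; apply: eq_bigr => j _; rewrite mxE. Qed.

Lemma Mz i k : M i k = 0 -> forall j, C i j * C k j = 0.
Proof.
rewrite ME => h j; apply: (psumr_eq0P _ h) => // q _.
by apply: mulr_ge0.
Qed.

Lemma Pos i k j : C i j != 0 -> C k j != 0 -> k != i -> k = nx i \/ k = pv i.
Proof.
move=> h1 h2 h3.
case: (eqVneq k (nx i)) => [->|n1]; first by left.
case: (eqVneq k (pv i)) => [->|n2]; first by right.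
have : M i k = 0 by rewrite /M (BBt hn) (negPf h3) (negPf n1) (negPf n2) !mul0r !addr0.
move/Mz => /(_ j) /eqP; by rewrite mulf_eq0 (negPf h1) (negPf h2).
Qed.

Lemma supp i j : C i j != 0 -> C (nx i) j != 0 ->
  forall r, r != i -> r != nx i -> C r j = 0.
Proof.
move=> h1 h2 r r1 r2; apply/eqP; apply/negPn/negP => h3.
have [e|e] := Pos h1 h3 r1; first by rewrite e eqxx in r2.
have : r != nx i by [].
have [e'|e'] := Pos h2 h3 r2.
  by move: (pv_nx2_neq hn i); rewrite -e e' eqxx.
by move: r1; rewrite e' nxK eqxx.
Qed.

Lemma zpn i j : C (pv i) j * C (nx i) j = 0.
Proof.
apply: Mz; rewrite /M (BBt hn) pvK (nx_neq hn i) (eq_sym (nx i)) (pv_nx_neq hn i).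
have -> : (nx i == pv (pv i)) = false.
  apply/eqP => e; move: (pv_nx2_neq hn i); by rewrite e pvK eqxx.
by rewrite !mul0r !addr0.
Qed.

Definition xp i j := (C (nx i) j != 0)%:R * C i j.
Definition yp i j := (C i j != 0)%:R * C (nx i) j.
Definition aa i := \sum_j xp i j ^+ 2.
Definition bb i := \sum_j yp i j ^+ 2.
Definition ww i j := ((C (nx i) j == 0) && (C (pv i) j == 0))%:R * C i j ^+ 2.

Lemma xyE i : \sum_j xp i j * yp i j = s i * t i.
Proof.
have -> : s i * t i = M i (nx i).
  by rewrite /M (BBt hn) (nx_neq hn i) eqxx (eq_sym (nx i)) (pv_nx_neq hn i) !mul0r mul1r add0r addr0.
rewrite ME; apply: eq_bigr => j _; rewrite /xp /yp.
case: (eqVneq (C i j) 0) => [->|h1]; first by rewrite !(mulr0, mul0r).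
case: (eqVneq (C (nx i) j) 0) => [->|h2]; first by rewrite !(mulr0, mul0r).
by rewrite !mul1r.
Qed.

Lemma CSineq i : s i ^+ 2 * t i ^+ 2 <= aa i * bb i.
Proof.
have := lagr_id (xp i) (yp i); rewrite xyE -/(aa i) -/(bb i) => e.
have : 0 <= \sum_j \sum_k (xp i j * yp i k - xp i k * yp i j) ^+ 2.
  by apply: sumr_ge0 => j _; apply: sumr_ge0 => k _; apply: sqr_ge0.
rewrite e exprMn; lra.
Qed.

Lemma diagE i : s i ^+ 2 + t (pv i) ^+ 2 = aa i + bb (pv i) + \sum_j ww i j.
Proof.
have -> : s i ^+ 2 + t (pv i) ^+ 2 = M i i.
  by rewrite /M (BBt hn) eqxx (eq_sym i (nx i)) (nx_neq hn i) (eq_sym i (pv i)) (pv_neq hn i) !mul0r mul1r !addr0.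
rewrite ME /aa /bb -!big_split; apply: eq_bigr => j _ /=.
rewrite /xp /yp /ww pvK.
have z := zpn i j.
case: (eqVneq (C (nx i) j) 0) => [e1|h1]; case: (eqVneq (C (pv i) j) 0) => [e2|h2] /=;
  try by rewrite ?mul0r ?mul1r; ring.
by move/eqP: z; rewrite mulf_eq0 (negPf h1) (negPf h2).
Qed.

Lemma aa_ge0 i : 0 <= aa i. Proof. by apply: sumr_ge0 => j _; apply: sqr_ge0. Qed.
Lemma bb_ge0 i : 0 <= bb i. Proof. by apply: sumr_ge0 => j _; apply: sqr_ge0. Qed.
Lemma ww_ge0 i j : 0 <= ww i j. Proof. by apply: mulr_ge0 => //; apply: sqr_ge0. Qed.

Lemma abE : forall i, aa i = s i ^+ 2 /\ bb i = t i ^+ 2.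
Proof.
apply: (cyc_ineq (n:=n)) => //.
- by apply: leq_trans hn.
- exact: aa_ge0.
- exact: bb_ge0.
- exact: CSineq.
- move=> i; have := diagE (nx i); rewrite nxK => ->.
  have : 0 <= \sum_j ww (nx i) j by apply: sumr_ge0 => j _; apply: ww_ge0.
  lra.
Qed.

Lemma wz i j : C i j != 0 -> C (nx i) j != 0 \/ C (pv i) j != 0.
Proof.
move=> h.
have e : \sum_j ww i j = 0.
  have := diagE i; have [-> _] := abE i; have [_ ->] := abE (pv i); lra.
have := psumr_eq0P (fun j _ => ww_ge0 i j) e (i:=j) isT.
rewrite /ww; case: (eqVneq (C (nx i) j) 0) => [_|]; last by left.
case: (eqVneq (C (pv i) j) 0) => [_|]; last by right.
by move=> /= /eqP; rewrite mul1r sqrf_eq0 (negPf h).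
Qed.

Definition inS i j := (C i j != 0) && (C (nx i) j != 0).

Lemma inS_ex i : exists j, inS i j.
Proof.
case: (boolP [exists j, inS i j]) => [/existsP //|/existsPn h]; exfalso.
have : \sum_j xp i j * yp i j = 0.
  apply: big1 => j _; move: (h j); rewrite /inS negb_and !negbK /xp /yp.
  by case/orP => /eqP ->; rewrite ?mulr0 ?mul0r.
rewrite xyE => /eqP; rewrite mulf_eq0; have := hs i; have := ht i.
by move=> h1 h2; rewrite (gt_eqF h1) (gt_eqF h2).
Qed.

Lemma inS_uniq i j k : inS i j -> inS i k -> j = k.
Proof.
move=> /andP [h1 h2] /andP [h3 h4]; apply/eqP/negPn/negP => jk.
have e : \sum_j \sum_k (xp i j * yp i k - xp i k * yp i j) ^+ 2 = 0.
  rewrite lagr_id xyE -/(aa i) -/(bb i).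
  have [-> ->] := abE i; rewrite exprMn; ring.
have e1 := psumr_eq0P (fun j _ => sumr_ge0 _ (fun k _ => sqr_ge0 _)) e (i:=j) isT.
have := psumr_eq0P (fun k _ => sqr_ge0 _) e1 (i:=k) isT.
rewrite /xp /yp h1 h2 h3 h4 !mul1r => /eqP; rewrite sqrf_eq0 subr_eq0 => /eqP ex.
have := hCi jk (a := C (nx i) k) (b := - C (nx i) j).
case.
  apply/matrixP => r q; rewrite !mxE.
  case: (eqVneq r i) => [->|ri]; first by rewrite mulrC ex; ring.
  case: (eqVneq r (nx i)) => [->|rn]; first by ring.
  by rewrite (supp h1 h2 ri rn) (supp h3 h4 ri rn); ring.
by move=> e0; rewrite e0 eqxx in h4.
Qed.

Lemma sum_single (F : 'I_l -> R) j0 : (forall j, j != j0 -> F j = 0) ->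
  \sum_j F j ^+ 2 = F j0 ^+ 2.
Proof.
by move=> h; rewrite (bigD1 j0) //= big1 ?addr0 // => j /h ->; rewrite expr0n.
Qed.

Lemma uniq_main : same_up_to_col_perm (cycle_B s t) C.
Proof.
have /fin_all_exists [k hk] : forall i, exists j, inS i j := inS_ex.
have kinj : injective k.
  move=> i i' e; apply/eqP/negPn/negP => ne.
  have /andP [h1 h2] := hk i; have /andP [h3 h4] := hk i'; rewrite -e in h3 h4.
  case: (eqVneq i' (nx i)) => [ei|ni].
    rewrite ei in h4.
    by move: h4; rewrite (supp h1 h2 (negbT (nx2_neq hn i)) (negbT (nx_neq hn (nx i)))) eqxx.
  by move: h3; rewrite (supp h1 h2 _ ni) ?eqxx // eq_sym.
have n0 : (0 < n)%N by apply: leq_trans hn.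
have ksurj : forall j, exists i, k i = j.
  move=> j.
  have [r hr] : exists r, C r j != 0.
    case: (boolP [exists r, C r j != 0]) => [/existsP //|/existsPn h]; exfalso.
    pose i0 := Ordinal n0.
    have [j' ne] : exists j', j != j'.
      case: (eqVneq j (k i0)) => [ej|ne]; last by exists (k i0).
      exists (k (nx i0)); rewrite ej; apply/eqP => /kinj /eqP.
      by rewrite eq_sym (nx_neq hn).
    have := hCi ne (a := 1) (b := 0).
    case; last by move=> /eqP; rewrite oner_eq0.
    apply/matrixP => r q; rewrite !mxE.
    by move: (h r) => /negPn /eqP ->; rewrite mul0r mulr0 addr0.
  case: (wz hr) => h.
    by exists r; apply: inS_uniq (hk r) _; rewrite /inS hr h.
  by exists (pv r); apply: inS_uniq (hk (pv r)) _; rewrite /inS pvK h hr.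
have /fin_all_exists [f hf] := ksurj.
exists f; split.
  by exists k => [j|i]; [exact: hf | apply: kinj; rewrite hf].
move=> r j; rewrite -[in LHS](hf j); move: (f j) => i.
have /andP [h1 h2] := hk i.
have hz : forall j, j != k i -> xp i j = 0 /\ yp i j = 0.
  move=> j' nj; rewrite /xp /yp.
  case: (eqVneq (C i j') 0) => [->|a1]; first by rewrite !mulr0 mul0r.
  case: (eqVneq (C (nx i) j') 0) => [->|a2]; first by rewrite !mulr0 mul0r.
  by move: nj; rewrite (inS_uniq (hk i) (j := k i) (k := j')) ?eqxx // /inS a1 a2.
have [ea eb] := abE i.
have es : C i (k i) = s i.
  move: ea; rewrite /aa (sum_single (j0 := k i)); last by move=> j' /hz [].
  rewrite /xp h2 mul1r => /eqP; rewrite eqrXn2 //; [by move/eqP| exact: ltW].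
have et : C (nx i) (k i) = t i.
  move: eb; rewrite /bb (sum_single (j0 := k i)); last by move=> j' /hz [].
  rewrite /yp h1 mul1r => /eqP; rewrite eqrXn2 //; [by move/eqP| exact: ltW].
rewrite Bentry //.
case: (eqVneq r i) => [->|ri]; first by rewrite es (eq_sym i) (nx_neq hn) mul1r mul0r addr0.
case: (eqVneq r (nx i)) => [->|rn]; first by rewrite et mul1r mul0r add0r.
by rewrite (supp h1 h2 ri rn) !mul0r addr0.
Qed.
End Uniq.

Section Core.
Variables (n : nat) (R : realType).
Hypothesis n0 : (0 < n)%N.
Variable r : 'I_n -> R.
Hypothesis hr : forall i, 0 < r i.
Hypothesis hP : 1 < \prod_i r i.

Definition Qf (i : 'I_n) := \prod_(j < n | (0 < j <= i)%N) r j.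

Lemma Qf_gt0 i : 0 < Qf i.
Proof. by apply: prodr_gt0 => j _. Qed.

Lemma pv_val (i : 'I_n) : nat_of_ord (pv i) = (if val i == 0 then n.-1 else i.-1)%N.
Proof. by []. Qed.

Lemma Q_step (i : 'I_n) : (0 < i)%N -> Qf i = r i * Qf (pv i).
Proof.
move=> h; rewrite /Qf (bigD1 i) /=; last by apply/andP; split.
congr (_ * _); apply: eq_bigl => j; rewrite -val_eqE /= ifF; [apply/idP/idP; lia| apply/eqP; lia].
Qed.

Lemma Q_zero (i : 'I_n) : nat_of_ord i = 0%N -> Qf i = 1.
Proof. by move=> h; rewrite /Qf big_pred0 // => j; apply: negbTE; apply/negP; lia. Qed.

Lemma P_split (i : 'I_n) : nat_of_ord i = 0%N -> \prod_j r j = r i * Qf (pv i).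
Proof.
move=> h; rewrite (bigD1 i) //=; congr (_ * _); apply: eq_bigl => j.
rewrite /= -val_eqE /= h /=; move: (ltn_ord j) => hj; apply/idP/idP; lia.
Qed.

Lemma core : exists nu : 'I_n -> R, (forall i, 0 < nu i) /\
  forall i, nu (pv i) + 1 < r i * nu i.
Proof.
set P := \prod_i r i.
set d := (P - 1) / n%:R.
have nR : 0 < n%:R :> R by rewrite ltr0n.
have d0 : 0 < d by apply: divr_gt0 => //; rewrite subr_gt0.
set S := \sum_j Qf j.
have S0 : forall i, Qf i <= S.
  move=> i; rewrite /S (bigD1 i) //= lerDl; apply: sumr_ge0 => j _; exact: ltW (Qf_gt0 j).
set K := (1 + S) / d.
have K0 : 0 < K by apply: divr_gt0 => //; have := S0 (Ordinal n0); have := Qf_gt0 (Ordinal n0); lra.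
exists (fun i => K * (1 + (nat_of_ord i)%:R * d) / Qf i); split.
  move=> i; apply: divr_gt0 (Qf_gt0 i); apply: mulr_gt0 => //.
  have : 0 <= (nat_of_ord i)%:R * d :> R by apply: mulr_ge0 => //; exact: ltW.
  lra.
move=> i.
have Qp := Qf_gt0 (pv i).
have key : r i * (K * (1 + (nat_of_ord i)%:R * d) / Qf i) =
    K * (1 + (nat_of_ord (pv i))%:R * d) / Qf (pv i) + K * d / Qf (pv i).
  case: (posnP (nat_of_ord i)) => h.
    rewrite Q_zero // h mul0r addr0 divr1.
    have hp : (nat_of_ord (pv i)) = n.-1 by rewrite /= h.
    have e : n%:R = (n.-1)%:R + 1 :> R by rewrite natr1 prednK.
    have eP : P = r i * Qf (pv i) by exact: P_split.
    rewrite hp.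
    have dd : d * n%:R = P - 1 by rewrite /d mulfVK // gt_eqF.
    apply: (@mulIf _ (Qf (pv i))); first by rewrite gt_eqF.
    rewrite mulrDl !mulfVK ?gt_eqF //.
    have hKd : 1 + S = K * d by rewrite /K mulfVK ?gt_eqF.
    rewrite e mulrDr mulr1 in dd.
    have eP2 : r i * Qf (pv i) = 1 + (d * n.-1%:R + d) by rewrite -eP dd; ring.
    rewrite hKd mulr1 -(mulrC K) -mulrA eP2; ring.
  rewrite Q_step //.
  have hp : (nat_of_ord i) = (nat_of_ord (pv i)).+1.
    rewrite /= ifF; [lia| apply/eqP; lia].
  rewrite hp -natr1.
  have ri := hr i.
  field; apply/andP; split; rewrite gt_eqF //.
have h1 : 1 < K * d / Qf (pv i).
  rewrite ltr_pdivlMr // mul1r /K mulfVK ?gt_eqF //.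
  have := S0 (pv i); lra.
rewrite key; lra.
Qed.
End Core.

Section Core2.
Variables (n : nat) (R : realType).
Hypothesis n0 : (0 < n)%N.

Lemma rev_pv (i : 'I_n) : rev_ord (pv i) = nx (rev_ord i).
Proof. apply: val_inj; have := ltn_ord i; rewrite /=; repeat case: ifP => /eqP; lia. Qed.

Lemma core2 (r : 'I_n -> R) : (forall i, 0 < r i) -> 1 < \prod_i r i ->
  exists nu : 'I_n -> R, (forall i, 0 < nu i) /\
  forall i, nu i + 1 < r i * nu (pv i).
Proof.
move=> hr hP.
have hP' : 1 < \prod_j r (nx (rev_ord j)).
  have hinj : injective (fun j : 'I_n => rev_ord (pv j)).
    by move=> x y /rev_ord_inj /(can_inj (@pvK n)).
  rewrite (reindex_inj hinj) /=.
  by under eq_bigr => j _ do rewrite rev_ordK pvK.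
have [nu [h1 h2]] := core n0 (r := fun j => r (nx (rev_ord j))) (fun j => hr _) hP'.
exists (fun i => nu (rev_ord i)); split => [i|i]; first exact: h1.
have := h2 (rev_ord (pv i)).
by rewrite rev_ordK pvK rev_pv nxK.
Qed.
End Core2.

Section Cons.
Variables (n : nat) (R : realType).
Hypothesis hn : (4 <= n)%N.

Lemma crit m k (C : 'M[R]_(m, k)) :
  (forall j1 j2, j1 != j2 -> (exists r, C r j1 != 0 /\ C r j2 = 0) \/
                             (exists r, C r j2 != 0 /\ C r j1 = 0)) ->
  (forall j, exists r, C r j != 0) -> pairwise_indep_cols C.
Proof.
move=> hw hnz j1 j2 ne a b e.
case: (hw _ _ ne) => h; first exact: indep_of h (hnz j2) _ _ e.
have [] := indep_of h (hnz j1) (a := b) (b := a); first by rewrite addrC.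
by move=> -> ->.
Qed.

Lemma Bnonneg (x y : 'I_n -> R) : (forall i, 0 < x i) -> (forall i, 0 < y i) ->
  nonneg_mx (cycle_B x y).
Proof.
move=> hx hy r j; rewrite Bentry //.
apply: addr_ge0; apply: mulr_ge0 => //; exact: ltW.
Qed.

Lemma witE (x y : 'I_n -> R) : (forall i, 0 < x i) -> (forall i, 0 < y i) ->
  forall a b, a != b -> exists r, cycle_B x y r a != 0 /\ cycle_B x y r b = 0.
Proof.
move=> hx hy a b ne.
case: (eqVneq a (nx b)) => e.
  exists (nx a); rewrite !Bentry // (nx_neq hn) eqxx.
  have -> : (nx a == b) = false by rewrite e (nx2_neq hn).
  have -> : (nx a == nx b) = false by apply/eqP => /nx_inj /eqP; rewrite (negPf ne).
  by rewrite ?(mul0r, mul1r, addr0, add0r) gt_eqF.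
exists a; rewrite !Bentry // eqxx (eq_sym a) (nx_neq hn) (negPf ne) (negPf e).
by rewrite ?(mul0r, mul1r, addr0, add0r) gt_eqF.
Qed.

Lemma nzE (x y : 'I_n -> R) : (forall i, 0 < x i) -> forall a, cycle_B x y a a != 0.
Proof.
by move=> hx a; rewrite Bentry // eqxx (eq_sym a) (nx_neq hn) mul1r mul0r addr0 gt_eqF.
Qed.

Lemma Bcp (x y : 'I_n -> R) : (forall i, 0 < x i) -> (forall i, 0 < y i) ->
  cp_factorization (cycle_B x y *m (cycle_B x y)^T) (cycle_B x y).
Proof.
move=> hx hy; split => //; first exact: Bnonneg.
apply: crit; last by move=> j; exists j; apply: nzE.
by move=> j1 j2 ne; left; apply: witE.
Qed.

Variables (s t : 'I_n -> R).
Hypotheses (hs : forall i, 0 < s i) (ht : forall i, 0 < t i).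

Lemma cons_L (L : 'I_n -> R) : (forall i, 0 < L i) ->
  (forall i, s i ^+ 2 * L i + t (pv i) ^+ 2 / L (pv i) < s i ^+ 2 + t (pv i) ^+ 2) ->
  exists l (C : 'M[R]_(n, l)), cp_factorization (cycle_B s t *m (cycle_B s t)^T) C /\
    ~ same_up_to_col_perm (cycle_B s t) C.
Proof.
move=> hL hw.
pose lam i := Num.sqrt (L i).
have hlam : forall i, 0 < lam i by move=> i; rewrite sqrtr_gt0.
have hlam2 : forall i, lam i ^+ 2 = L i by move=> i; rewrite sqr_sqrtr // ltW.
pose x i := s i * lam i.
pose y i := t i / lam i.
have hx : forall i, 0 < x i by move=> i; apply: mulr_gt0.
have hy : forall i, 0 < y i by move=> i; apply: divr_gt0.
have hxy : forall i, x i * y i = s i * t i.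
  by move=> i; rewrite /x /y; field; rewrite gt_eqF.
pose w i := s i ^+ 2 + t (pv i) ^+ 2 - x i ^+ 2 - y (pv i) ^+ 2.
have hw0 : forall i, 0 < w i.
  move=> i; have := hw i; rewrite /w.
  have -> : x i ^+ 2 = s i ^+ 2 * L i by rewrite /x exprMn hlam2.
  have -> : y (pv i) ^+ 2 = t (pv i) ^+ 2 / L (pv i) by rewrite /y expr_div_n hlam2.
  lra.
pose E := cycle_B x y.
pose D := \matrix_(i < n, j < n) ((i == j)%:R * Num.sqrt (w j)).
have hD : forall i j, D i j = (i == j)%:R * Num.sqrt (w j) by move=> i j; rewrite mxE.
have hsq : forall i, 0 < Num.sqrt (w i) by move=> i; rewrite sqrtr_gt0.
exists (n + n)%N, (row_mx E D); split; last first.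
  move=> [f [hb _]]; have := bij_eq_card hb; rewrite !card_ord; lia.
split.
- move=> r j; rewrite -[j]splitK; case: (split j) => j' /=.
    by rewrite row_mxEl; apply: Bnonneg.
  rewrite row_mxEr hD; apply: mulr_ge0 => //; exact: ltW.
- apply: crit.
    move=> j1 j2; rewrite -[j1]splitK -[j2]splitK.
    case: (split j1) => a; case: (split j2) => b /= ne.
    + have ne' : a != b by apply: contraNneq ne => ->.
      have [r [h1 h2]] := witE hx hy ne'.
      by left; exists r; rewrite !row_mxEl.
    + left; exists (if a == b then nx a else a); rewrite row_mxEl row_mxEr hD.
      case: (eqVneq a b) => [<-|ab].
        by rewrite (nx_neq hn) mul0r Bentry // (nx_neq hn) eqxx mul0r mul1r add0r gt_eqF.
      by rewrite (negPf ab) mul0r nzE.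
    + right; exists (if b == a then nx b else b); rewrite row_mxEl row_mxEr hD.
      case: (eqVneq b a) => [<-|ab].
        by rewrite (nx_neq hn) mul0r Bentry // (nx_neq hn) eqxx mul0r mul1r add0r gt_eqF.
      by rewrite (negPf ab) mul0r nzE.
    + have ne' : a != b by apply: contraNneq ne => ->.
      left; exists a; rewrite !row_mxEr !hD eqxx (negPf ne') mul0r mul1r gt_eqF //.
  move=> j; rewrite -[j]splitK; case: (split j) => a /=; exists a.
    by rewrite row_mxEl nzE.
  by rewrite row_mxEr hD eqxx mul1r gt_eqF.
- rewrite tr_row_mx mul_row_col; apply/matrixP => i k.
  rewrite (BBt hn) [RHS]mxE /E (BBt hn) !hxy.
  have -> : (D *m D^T) i k = (k == i)%:R * w i.
    rewrite mxE.
    under eq_bigr => j _ do rewrite [D^T j k]mxE !hD (eq_sym i j) mulrACA -mulrA.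
    rewrite sum_delta; congr (_ * _); by rewrite -expr2 sqr_sqrtr // ltW.
  rewrite /w; ring.
Qed.
End Cons.

Section Fin.
Variables (n : nat) (R : realType).
Hypothesis hn : (4 <= n)%N.
Variables (s t : 'I_n -> R).
Hypotheses (hs : forall i, 0 < s i) (ht : forall i, 0 < t i).

Lemma prod_ratio : \prod_i (t (pv i) ^+ 2 / s i ^+ 2) =
  (\prod_i t i) ^+ 2 / (\prod_i s i) ^+ 2.
Proof.
rewrite prodf_div -!prodrXl; congr (_ / _).
have pinj : injective (@pv n) by exact: can_inj (@pvK n).
by rewrite [RHS](reindex_inj pinj).
Qed.

Lemma prod_ratio2 : \prod_i (s i ^+ 2 / t (pv i) ^+ 2) =
  (\prod_i s i) ^+ 2 / (\prod_i t i) ^+ 2.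
Proof.
rewrite prodf_div -!prodrXl; congr (_ / _).
have pinj : injective (@pv n) by exact: can_inj (@pvK n).
by rewrite [RHS](reindex_inj pinj).
Qed.

Lemma nonuniq : \prod_i s i != \prod_i t i ->
  exists l (C : 'M[R]_(n, l)), cp_factorization (cycle_B s t *m (cycle_B s t)^T) C /\
    ~ same_up_to_col_perm (cycle_B s t) C.
Proof.
move=> hne.
have n0 : (0 < n)%N by apply: leq_trans hn.
have PS : 0 < \prod_i s i by apply: prodr_gt0.
have PT : 0 < \prod_i t i by apply: prodr_gt0.
have hs2 : forall i, 0 < s i ^+ 2 by move=> i; apply: exprn_gt0.
have ht2 : forall i, 0 < t i ^+ 2 by move=> i; apply: exprn_gt0.
case: (ltgtP (\prod_i s i) (\prod_i t i)) => [lt|gt|eq]; last by rewrite eq eqxx in hne.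
- have hP : 1 < \prod_i (t (pv i) ^+ 2 / s i ^+ 2).
    rewrite prod_ratio ltr_pdivlMr ?exprn_gt0 // mul1r ltrXn2r //; exact: ltW.
  have [nu [hnu1 hnu2]] := core n0 (fun i => divr_gt0 (ht2 (pv i)) (hs2 i)) hP.
  apply: (cons_L hn hs ht (L := fun i => 1 + 1 / nu i)).
    move=> i; have := hnu1 i => h; have : 0 < 1 / nu i by apply: divr_gt0.
    lra.
  move=> i.
  have a0 := hnu1 i; have b0 := hnu1 (pv i).
  have key := hnu2 i.
  rewrite -(ltr_pM2r (hs2 i)) mulrDl mulrAC mulfVK ?gt_eqF // in key.
  set a := nu i in a0 key *; set b := nu (pv i) in b0 key *.
  set S2 := s i ^+ 2; set T2 := t (pv i) ^+ 2.
  have e : S2 * (1 + 1 / a) + T2 / (1 + 1 / b) =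
      S2 + T2 + (S2 * (b + 1) - T2 * a) / (a * (b + 1)).
    by field; apply/and3P; split; apply: lt0r_neq0; lra.
  rewrite e.
  have : (S2 * (b + 1) - T2 * a) / (a * (b + 1)) < 0.
    rewrite ltr_pdivrMr ?mul0r; last by apply: mulr_gt0; lra.
    rewrite /S2 /T2; lra.
  lra.
- have hP : 1 < \prod_i (s i ^+ 2 / t (pv i) ^+ 2).
    rewrite prod_ratio2 ltr_pdivlMr ?exprn_gt0 // mul1r ltrXn2r //; exact: ltW.
  have [nu [hnu1 hnu2]] := core2 n0 (fun i => divr_gt0 (hs2 i) (ht2 (pv i))) hP.
  apply: (cons_L hn hs ht (L := fun i => nu i / (nu i + 1))).
    move=> i; have := hnu1 i => h; apply: divr_gt0 => //; lra.
  move=> i.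
  have a0 := hnu1 i; have b0 := hnu1 (pv i).
  have key := hnu2 i.
  rewrite -(ltr_pM2r (ht2 (pv i))) mulrDl mulrAC mulfVK ?gt_eqF // in key.
  set a := nu i in a0 key *; set b := nu (pv i) in b0 key *.
  set S2 := s i ^+ 2; set T2 := t (pv i) ^+ 2.
  have e : S2 * (a / (a + 1)) + T2 / (b / (b + 1)) =
      S2 + T2 + (T2 * (a + 1) - S2 * b) / ((a + 1) * b).
    by field; apply/and3P; split; apply: lt0r_neq0; lra.
  rewrite e.
  have : (T2 * (a + 1) - S2 * b) / ((a + 1) * b) < 0.
    rewrite ltr_pdivrMr ?mul0r; last by apply: mulr_gt0; lra.
    rewrite /S2 /T2; lra.
  lra.
Qed.
End Fin.

Unset Implicit Arguments.

Theorem corollary4p4 (R : realType) (n : nat) (A : 'M[R]_n) (s t : 'I_n -> R) :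
  (4 <= n)%N ->
  completely_positive A ->
  graph_is_cycle A ->
  (forall i, 0 < s i) -> (forall i, 0 < t i) ->
  A = cycle_B s t *m (cycle_B s t)^T ->
  (unique_cp_factorization A (cycle_B s t) <-> \prod_(i < n) s i = \prod_(i < n) t i).
Proof.
move=> hn _ _ hs ht ->; split.
  move=> [hB hU]; apply/eqP/negPn/negP => hne.
  have [l [C [hC hnot]]] := nonuniq hn hs ht hne.
  exact: hnot (hU _ _ hC).
move=> hst; split; first exact: Bcp.
move=> l C [h0 h1 h2].
exact: (uniq_main hn hs ht h0 h1 (esym h2) hst).
Qed.
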